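(* Let a regular network on $n$ cells with adjacency matrix $A$ be given. A subspace $S\subseteq\mathbb{C}^n$ is a synchrony subspace if and only if $S$ is a polydiagonal and $S=J_1\oplus\cdots\oplus J_m$ for some special Jordan subspaces $J_1,\dots,J_m$ to the network.
   Context: A regular network is a finite directed graph on cells $1,\dots,n$ (loops and multiple arrows allowed) in which every cell receives the same number $v$ of arrows (the valency). Its adjacency matrix $A=[a_{ij}]$ has $a_{ij}$ equal to the number of arrows cell $i$ receives from cell $j$; every row sum is $v$. $A$ acts on the total phase space $\mathbb{C}^n$ (each cell phase space taken to be $\mathbb{C}$). A polydiagonal is a subspace of $\mathbb{C}^n$ of the form $\{x : x_i=x_j \text{ for all } (i,j)\in R\}$ for some (possibly empty) set $R$ of index pairs. A synchrony subspace is a polydiagonal that is invariant under $A$ (by a theorem of Golubitsky, Stewart and Török this is equivalent to being flow-invariant for all admissible vector fields of the network). $F=\{x_1=\cdots=x_n\}$ is the fully synchrony subspace. $P(W)$ is the smallest polydiagonal containing a subspace $W$. For an eigenvalue $\lambda$ of $A$, the generalized eigenspace is $G_\lambda=\operatorname{Ker}(A-\lambda I)^p$ for $p$ large. A Jordan chain of length $k$ for $\lambda$ is a sequence of nonzero vectors $x_1,\dots,x_k$ with $(A-\lambda I)x_1=0$ and $(A-\lambda I)x_i=x_{i-1}$ for $2\le i\le k$; a Jordan subspace is the span of a Jordan chain. A Jordan subspace $W$ of a generalized eigenspace $G$ is a special Jordan subspace to the network if for every Jordan subspace $U$ of $G$ with $\dim U=\dim W$ and $P(U)\subseteq P(W)$,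 either $P(U)=P(W)$ or $U=F$. *)

(* Defs.v *)
(* Subspaces of R^n are row spaces of n x n matrices
   (mxalgebra, %MS).  Vectors of the phase space are row vectors 'rV_n; the
   linear map x |-> A x on column vectors is x |-> x *m A^T on row vectors. *)
From HB Require Import structures.
From mathcomp Require Import all_boot all_order all_algebra.
Set Implicit Arguments. Unset Strict Implicit. Unset Printing Implicit Defensive.
Import Order.TTheory GRing.Theory Num.Theory.
Local Open Scope ring_scope.

Section Network.
Variables (R : numClosedFieldType) (n : nat).

Definition regular_network (A : 'M[nat]_n) (v : nat) : Prop :=
  forall i : 'I_n, (\sum_(j < n) A i j)%N = v.

Definition adjR (A : 'M[nat]_n) : 'M[R]_n := (map_mx (fun a : nat => a%:R) A)^T.

(* column vector e_i - e_j ;  x *m diag_pair i j = x_i - x_j *)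
Definition diag_pair (i j : 'I_n) : 'M[R]_(n, 1) :=
  \col_k ((k == i)%:R - (k == j)%:R).

Definition polydiag (r : {set 'I_n * 'I_n}) : 'M[R]_n :=
  (\bigcap_(p in r) kermx (diag_pair p.1 p.2))%MS.

Definition is_polydiagonal (S : 'M[R]_n) : Prop :=
  exists r : {set 'I_n * 'I_n}, (S == polydiag r)%MS.

Definition Fsync : 'M[R]_n := polydiag setT.

Definition Pclos (W : 'M[R]_n) : 'M[R]_n :=
  (\bigcap_(r : {set 'I_n * 'I_n} | (W <= polydiag r)%MS) polydiag r)%MS.

Definition is_synchrony (A : 'M[nat]_n) (S : 'M[R]_n) : Prop :=
  is_polydiagonal S /\ (S *m adjR A <= S)%MS.

(* Jordan chain x_1, ..., x_k (here indexed x 0, ..., x (k-1)) for lam *)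
Definition jordan_chain (A : 'M[nat]_n) (lam : R) (k : nat)
    (x : nat -> 'rV[R]_n) : Prop :=
  [/\ (forall i, (i < k)%N -> x i != 0),
      x 0%N *m (adjR A - lam%:M) = 0 &
      (forall i, (i.+1 < k)%N -> x i.+1 *m (adjR A - lam%:M) = x i)].

Definition is_jordan_subspace (A : 'M[nat]_n) (lam : R) (W : 'M[R]_n) : Prop :=
  exists k (x : nat -> 'rV[R]_n),
    [/\ (0 < k)%N, jordan_chain A lam k x &
        (W == \matrix_(i < k) x (i : nat))%MS].

Definition is_special (A : 'M[nat]_n) (W : 'M[R]_n) : Prop :=
  exists lam : R, is_jordan_subspace A lam W /\
    forall U : 'M[R]_n, is_jordan_subspace A lam U ->
      \rank U = \rank W -> (Pclos U <= Pclos W)%MS ->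
      (Pclos U == Pclos W)%MS \/ (U == Fsync)%MS.

End Network.

(* Main.v *)
Require Import Defs.
From HB Require Import structures.
From mathcomp Require Import all_boot all_order all_algebra.
From Stdlib Require Import Classical ClassicalEpsilon.
From mathcomp Require Import zify ring.
Set Implicit Arguments. Unset Strict Implicit. Unset Printing Implicit Defensive.
Import Order.TTheory GRing.Theory Num.Theory.

Lemma count_lemma (a d : nat -> nat) (P : nat) : 0 < P -> d 0 = 0 ->
  (forall k, 0 < k < P -> a k + d k.-1 + d k.+1 <= 2 * d k) ->
  a P + d P.-1 <= d P ->
  \sum_(1 <= k < P.+1) k * a k <= d P.
Proof.
move=> P0 d0 Hk HP.
have inv : forall j, j < P -> \sum_(1 <= k < j.+1) k * a k + j * d j.+1 <= j.+1 * d j.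
  elim=> [|j IH] jP.
    by rewrite big_geq // d0.
  rewrite big_nat_recr //=.
  have := IH (ltnW jP); have := Hk j.+1; rewrite ltn0Sn jP => /(_ isT) /=.
  set s := \sum_(1 <= k < j.+1) k * a k.
  move=> h1 h2; nia.
rewrite -(prednK P0) big_nat_recr //= prednK //.
have h0 : P.-1 < P by rewrite ltn_predL.
have := inv P.-1 h0; rewrite prednK //.
set s := \sum_(1 <= k < P) k * a k.
move: HP; nia.
Qed.

Local Open Scope ring_scope.


Section Rel.
Variables (R : numClosedFieldType) (n : nat).

Lemma sum_delta (F : 'I_n -> R) i : \sum_k F k * (k == i)%:R = F i.
Proof.
rewrite (bigD1 i) //= eqxx mulr1 big1 ?addr0 // => k /negPf->; exact: mulr0.
Qed.

Lemma diag_pairE (z : 'rV[R]_n) i j : (z *m diag_pair R i j) 0 0 = z 0 i - z 0 j.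
Proof.
rewrite !mxE; under eq_bigr => k _ do rewrite !mxE mulrBr.
by rewrite sumrB !sum_delta.
Qed.

Lemma kerdP (z : 'rV[R]_n) i j :
  (z <= kermx (diag_pair R i j))%MS = (z 0 i == z 0 j).
Proof.
apply/sub_kermxP/eqP => [H|H].
  by apply/eqP; rewrite -subr_eq0 -diag_pairE H mxE.
by apply/matrixP => a b; rewrite !ord1 diag_pairE H subrr mxE.
Qed.

Definition prel m (W : 'M[R]_(m, n)) : {set 'I_n * 'I_n} :=
  [set p | (W <= kermx (diag_pair R p.1 p.2))%MS].

Lemma polydiag_sub m (W : 'M[R]_(m, n)) r :
  (W <= polydiag R r)%MS = (r \subset prel W).
Proof.
apply/sub_bigcapmxP/subsetP => H p Hp.
  by rewrite inE; apply: H.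
by have := H p Hp; rewrite inE.
Qed.

Lemma polydiag_anti (r r' : {set 'I_n * 'I_n}) : r \subset r' -> (polydiag R r' <= polydiag R r)%MS.
Proof.
move=> rr'; rewrite polydiag_sub; apply: subset_trans rr' _.
by rewrite -polydiag_sub.
Qed.

Lemma Pclos_rel (W : 'M[R]_n) : (Pclos W :=: polydiag R (prel W))%MS.
Proof.
apply/eqmxP/andP; split.
  by by apply: (bigcapmx_inf (prel W)) => //; rewrite polydiag_sub.
apply/sub_bigcapmxP => r; rewrite polydiag_sub => H.
exact: polydiag_anti.
Qed.

Lemma rel_eqmx m1 m2 (W : 'M[R]_(m1, n)) (W' : 'M[R]_(m2, n)) :
  (W :=: W')%MS -> prel W = prel W'.
Proof. by move=> e; apply/setP => p; rewrite !inE e. Qed.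

Lemma rel_anti m1 m2 (W : 'M[R]_(m1, n)) (W' : 'M[R]_(m2, n)) :
  (W <= W')%MS -> prel W' \subset prel W.
Proof.
move=> sW; apply/subsetP => p; rewrite !inE => H; exact: submx_trans sW H.
Qed.

Lemma Pclos_eqmx (W W' : 'M[R]_n) : (W :=: W')%MS -> Pclos W = Pclos W'.
Proof.
move=> e; rewrite /Pclos; apply: eq_bigl => r; by rewrite e.
Qed.

Lemma sub_Pclos (W : 'M[R]_n) : (W <= Pclos W)%MS.
Proof. by rewrite Pclos_rel polydiag_sub. Qed.

Lemma Pclos_le_rel (U W : 'M[R]_n) :
  (Pclos U <= Pclos W)%MS -> prel W \subset prel U.
Proof.
move=> H; rewrite -polydiag_sub -Pclos_rel.
exact: submx_trans (sub_Pclos U) H.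
Qed.

Lemma rel_eq_Pclos (U W : 'M[R]_n) : prel U = prel W -> (Pclos U == Pclos W)%MS.
Proof.
move=> e; apply/eqmxP; apply: eqmx_trans (Pclos_rel U) _; rewrite e.
exact: eqmx_sym (Pclos_rel W).
Qed.

Lemma rel_rowP m (W : 'M[R]_(m, n)) i j :
  ((i, j) \in prel W) = [forall k, W k i == W k j].
Proof.
rewrite inE /=; apply/row_subP/forallP => H k.
  by have := H k; rewrite kerdP !mxE.
by rewrite kerdP !mxE; apply: H.
Qed.

End Rel.


Section Chain.
Variables (R : numClosedFieldType) (n : nat) (A : 'M[nat]_n).
Local Notation M := (adjR R A).
Definition Nl (lam : R) : 'M[R]_n := M - lam%:M.

Definition Kc lam k (u : 'rV[R]_n) : 'M[R]_(k, n) :=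
  \matrix_(i < k) (u *m Nl lam ^+ (k.-1 - i)).
Definition K lam k u : 'M[R]_n := <<Kc lam k u>>%MS.

Lemma KcE lam k u : (K lam k u :=: Kc lam k u)%MS.
Proof. exact: genmxE. Qed.

Lemma row_Kc lam k u i : row i (Kc lam k u) = u *m Nl lam ^+ (k.-1 - i).
Proof. by rewrite rowK. Qed.

Lemma powN0 lam k j (u : 'rV[R]_n) : u *m Nl lam ^+ k = 0 -> (k <= j)%N ->
  u *m Nl lam ^+ j = 0.
Proof.
move=> H kj; rewrite -(subnKC kj) exprD mulmxA H mul0mx //.
Qed.

Lemma Kc_pow lam k u j : (j < k)%N -> (u *m Nl lam ^+ j <= Kc lam k u)%MS.
Proof.
move=> jk; have ik : (k.-1 - j < k)%N by rewrite (leq_ltn_trans (leq_subr _ _)) // prednK // (leq_ltn_trans _ jk).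
rewrite (_ : u *m Nl lam ^+ j = row (Ordinal ik) (Kc lam k u)) ?row_sub //.
rewrite row_Kc /= subKn //; by rewrite -ltnS prednK // (leq_ltn_trans _ jk).
Qed.

Lemma Kc_stable lam k u : u *m Nl lam ^+ k = 0 ->
  (Kc lam k u *m Nl lam <= Kc lam k u)%MS.
Proof.
move=> uk; apply/row_subP => i; rewrite row_mul row_Kc -mulmxA mulmxE -exprSr.
case: (ltnP (k.-1 - i).+1 k) => h.
  exact: Kc_pow.
by rewrite (powN0 uk h) sub0mx.
Qed.

Lemma sub_stable_pow m (V : 'M[R]_(m, n)) (B : 'M[R]_n) (z : 'rV[R]_n) j :
  (V *m B <= V)%MS -> (z <= V)%MS -> (z *m B ^+ j <= V)%MS.
Proof.
move=> st zV; elim: j => [|j IH]; first by rewrite expr0 mulmx1.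
by rewrite exprSr mulmxA (submx_trans (submxMr _ IH)).
Qed.

Lemma Kc_free lam k u : (0 < k)%N -> u *m Nl lam ^+ k = 0 ->
  u *m Nl lam ^+ k.-1 != 0 -> row_free (Kc lam k u).
Proof.
move=> k0 uk uk1; rewrite -kermx_eq0; apply/rowV0P => w /sub_kermxP wK.
apply/eqP; apply: contraT => /eqP wn0.
have [i1 Hi1] : exists i, w 0 i != 0.
  apply/existsP; apply: contraT; rewrite negb_exists => /forallP H.
  exfalso; apply: wn0; apply/matrixP => a b; rewrite !ord1 mxE; exact/eqP/negPn/H.
pose i0 := [arg max_(i > i1 | w 0 i != 0) i].
have [Hi0 Hmax] : w 0 i0 != 0 /\ forall i, w 0 i != 0 -> (i <= i0)%N.
  rewrite /i0; case: arg_maxnP => // i Hi Hm; split => // j /Hm; done.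
have : (w *m Kc lam k u) *m Nl lam ^+ i0 = w 0 i0 *: (u *m Nl lam ^+ k.-1).
  rewrite [w *m _]mulmx_sum_row mulmx_suml (bigD1 i0) //= big1 ?addr0.
    rewrite row_Kc -scalemxAl -mulmxA mulmxE -exprD subnK //.
    by rewrite -ltnS prednK.
  move=> i ni; rewrite row_Kc -scalemxAl -mulmxA mulmxE -exprD.
  case: (eqVneq (w 0 i) 0) => [->|wi]; first by rewrite scale0r.
  rewrite (powN0 uk) ?scaler0 //.
  have := Hmax i wi; rewrite leq_eqVlt => /orP[/eqP/val_inj e|lt]; first by rewrite e eqxx in ni.
  have ik := ltn_ord i; lia.
rewrite wK mul0mx => /esym /eqP; rewrite scalemx_eq0 (negPf Hi0) /= => /eqP e.
by rewrite e eqxx in uk1.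
Qed.

Lemma rank_Kc lam k u : (0 < k)%N -> u *m Nl lam ^+ k = 0 ->
  u *m Nl lam ^+ k.-1 != 0 -> \rank (Kc lam k u) = k.
Proof. by move=> *; apply/eqP; apply: Kc_free. Qed.

Lemma rank_Kc_le lam k u : (\rank (K lam k u) <= k)%N.
Proof. by rewrite KcE rank_leq_row. Qed.


Lemma K_jordan lam k u : (0 < k)%N -> u *m Nl lam ^+ k = 0 ->
  u *m Nl lam ^+ k.-1 != 0 -> is_jordan_subspace A lam (K lam k u).
Proof.
move=> k0 uk uk1; exists k, (fun i => u *m Nl lam ^+ (k.-1 - i)); split => //.
  split.
  - move=> i ik; apply: contraNneq uk1 => e; apply/eqP; apply: (powN0 e); exact: leq_subr.
  - by rewrite subn0 -/(Nl lam) -mulmxA mulmxE -exprSr prednK.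
  - move=> i ik; rewrite -/(Nl lam) -mulmxA mulmxE -exprSr; congr (_ *m _ ^+ _).
    lia.
by apply/eqmxP; exact: genmxE.
Qed.

Lemma jordan_K lam U : is_jordan_subspace A lam U -> exists k u,
  [/\ (0 < k)%N, u *m Nl lam ^+ k = 0, u *m Nl lam ^+ k.-1 != 0 &
      (U :=: Kc lam k u)%MS].
Proof.
case=> k [x [k0 [xn0 x0 xS] /eqmxP eU]].
set u := x k.-1.
have cl : forall j, (j < k)%N -> x (k.-1 - j)%N = u *m Nl lam ^+ j.
  elim=> [|j IH] jk; first by rewrite subn0 expr0 mulmx1.
  rewrite exprSr -mulmxE mulmxA -IH; last lia.
  have e : (k.-1 - j = (k.-1 - j.+1).+1)%N by lia.
  by rewrite e xS //; lia.
have uk1 : u *m Nl lam ^+ k.-1 = x 0%N by rewrite -cl ?subnn // prednK.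
exists k, u; split => //.
- by rewrite -(prednK k0) exprSr mulmxA uk1 x0.
- by rewrite uk1 xn0.
apply: eqmx_trans eU _; apply/eqmxP; apply/eqmxP.
suff -> : \matrix_(i < k) x i = Kc lam k u by [].
apply/row_matrixP => i; rewrite row_Kc rowK -cl; first by congr (x _); have := ltn_ord i; lia.
have := ltn_ord i; lia.
Qed.

End Chain.


Lemma ex_max (R : numDomainType) (I : eqType) (f : I -> R) (x : I) (s : seq I) :
  (forall i, f i \is Num.real) -> exists i, forall j, j \in x :: s -> f j <= f i.
Proof.
move=> fr; elim: s => [|y s [i Hi]].
  by exists x => j; rewrite inE => /eqP->.
case/orP: (real_leVge (fr y) (fr i)) => h.
  exists i => j; rewrite !inE => /or3P[/eqP->|/eqP->|js]; [apply: Hi; rewrite inE eqxx//|exact: h|].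
  by apply: Hi; rewrite inE js orbT.
exists y => j; rewrite !inE => /or3P[/eqP->|/eqP->|js] //.
  by apply: le_trans h; apply: Hi; rewrite inE eqxx.
by apply: le_trans h; apply: Hi; rewrite inE js orbT.
Qed.

Section Perron.
Variables (R : numClosedFieldType) (n v : nat) (A : 'M[nat]_n).
Hypothesis hA : regular_network A v.

Lemma Mentry (z : 'rV[R]_n) i : (z *m adjR R A) 0 i = \sum_j z 0 j * (A i j)%:R.
Proof. by rewrite !mxE; apply: eq_bigr => j _; rewrite !mxE. Qed.

Lemma Nentry lam (z : 'rV[R]_n) i :
  (z *m Nl A lam) 0 i = \sum_j z 0 j * (A i j)%:R - lam * z 0 i.
Proof.
by rewrite /Nl mulmxBr mul_mx_scalar mxE -Mentry !mxE.
Qed.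

Lemma rowsum i : \sum_j (A i j)%:R = v%:R :> R.
Proof. by rewrite -natr_sum hA. Qed.

Lemma perron lam k (u : 'rV[R]_n) : (1 < k)%N -> u *m Nl A lam ^+ k = 0 ->
  (forall i j, (u *m Nl A lam ^+ k.-1) 0 i = (u *m Nl A lam ^+ k.-1) 0 j) ->
  u *m Nl A lam ^+ k.-1 = 0.
Proof.
move=> k1 uk cst; set c1 := u *m _ ^+ _ in cst *.
apply/eqP; apply: contraT => c1n0; exfalso.
have [i0 Hi0] : exists i, c1 0 i != 0.
  case: (boolP [exists i, c1 0 i != 0]) => [/existsP [i Hi]|]; first by exists i.
  rewrite negb_exists => /forallP H; move/negP: c1n0 => []; apply/eqP.
  by apply/rowP => b; rewrite (eqP (negbNE (H b))) mxE.
set c := c1 0 i0 in Hi0.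
have cE : forall i, c1 0 i = c by move=> i; rewrite /c (cst i i0).
have lamv : lam = v%:R.
  have : (c1 *m Nl A lam) 0 i0 = 0.
    by rewrite /c1 -mulmxA mulmxE -exprSr prednK ?uk ?mxE // ltnW.
  rewrite Nentry; under eq_bigr => j _ do rewrite cE.
  rewrite -mulr_sumr rowsum cE [lam * _]mulrC -mulrBr => /eqP; rewrite mulf_eq0 (negPf Hi0) /=.
  by rewrite subr_eq0 => /eqP->.
set w := u *m Nl A lam ^+ k.-2.
have wN : w *m Nl A lam = c1.
  by rewrite /w /c1 -mulmxA mulmxE -exprSr; congr (_ *m _ ^+ _); lia.
pose y j := 'Re (w 0 j / c).
have yr : forall j, y j \is Num.real by move=> j; exact: Creal_Re.
have eq1 : forall i, \sum_j y j * (A i j)%:R - y i * v%:R = 1.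
  move=> i; have := congr1 (fun m : 'rV_n => m 0 i) wN; rewrite /= Nentry cE lamv.
  move=> /(congr1 (fun x => 'Re (x / c))).
  rewrite divff // (Creal_ReP _ (rpred1 _)) => H; apply: etrans H.
  rewrite mulrBl raddfB /= mulr_suml raddf_sum /=; congr (_ - _).
    by apply: eq_bigr => j _; rewrite mulrAC ReMr ?realn.
  by rewrite mulrC -mulrA ReMl ?realn // mulrC.
have [imax Hmax] := ex_max i0 (enum 'I_n) yr.
have := eq1 imax.
have le : \sum_j y j * (A imax j)%:R <= y imax * v%:R.
  rewrite -(rowsum imax) mulr_sumr; apply: ler_sum => j _; rewrite [y imax * _]mulrC [y j * _]mulrC.
  by apply: ler_wpM2l; rewrite ?ler0n // Hmax // inE mem_enum orbT.
move=> e; move: le; rewrite -subr_le0 e.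
by rewrite ler10.
Qed.

End Perron.


Section Misc.
Variables (R : numClosedFieldType) (n : nat) (A : 'M[nat]_n).

Lemma Fsync_const (u : 'rV[R]_n) : u != 0 -> (forall i j, u 0 i = u 0 j) ->
  (u :=: Fsync R n)%MS.
Proof.
move=> un0 cst; apply/eqmxP/andP; split.
  rewrite /Fsync polydiag_sub; apply/subsetP => p _; rewrite inE kerdP.
  by apply/eqP.
have [i1 Hi1] : exists i, u 0 i != 0.
  case: (boolP [exists i, u 0 i != 0]) => [/existsP [i Hi]|]; first by exists i.
  rewrite negb_exists => /forallP H; move/negP: un0 => []; apply/eqP.
  by apply/rowP => b; rewrite (eqP (negbNE (H b))) mxE.
apply/row_subP => a; set z := row a _.
have zF : (z <= Fsync R n)%MS by exact: row_sub.
have zc : forall i j, z 0 i = z 0 j.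
  move=> i j; move: zF; rewrite /Fsync polydiag_sub => /subsetP /(_ (i, j)).
  by rewrite !inE kerdP => /(_ isT) /eqP.
have -> : z = (z 0 i1 / u 0 i1) *: u.
  apply/rowP => b; rewrite [RHS]mxE (cst b i1) -mulrA mulVf // mulr1; exact: zc.
exact: scalemx_sub.
Qed.

Lemma Kc_sub lam k (u : 'rV[R]_n) m (V : 'M[R]_(m, n)) : (V *m Nl A lam <= V)%MS -> (u <= V)%MS ->
  (Kc A lam k u <= V)%MS.
Proof. by move=> st uV; apply/row_subP => a; rewrite row_Kc sub_stable_pow. Qed.

Lemma Kc_annih lam k (u : 'rV[R]_n) : u *m Nl A lam ^+ k = 0 -> Kc A lam k u *m Nl A lam ^+ k = 0.
Proof.
move=> uk; apply/row_matrixP => a; rewrite row_mul row_Kc row0 -mulmxA mulmxE -exprD.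
by apply: (powN0 uk); rewrite leq_addl.
Qed.

Lemma sub_annih m (z : 'rV[R]_n) (V : 'M[R]_(m, n)) (B : 'M[R]_n) : (z <= V)%MS -> V *m B = 0 ->
  z *m B = 0.
Proof. by case/submxP => D -> VB; rewrite -mulmxA VB mulmx0. Qed.

Lemma KcB lam k (x w : 'rV[R]_n) : Kc A lam k (x - w) = Kc A lam k x - Kc A lam k w.
Proof.
apply/row_matrixP => a; rewrite row_Kc.
by rewrite [row a (_ - _)]linearB /= !row_Kc mulmxBl.
Qed.

Lemma entry_BZ (X Y : 'rV[R]_n) (c : R) i : (X - c *: Y) 0 i = X 0 i - c * Y 0 i.
Proof. by rewrite !mxE. Qed.

Lemma fit lam k (u x : 'rV[R]_n) (i j : 'I_n) : u *m Nl A lam ^+ k = 0 ->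
  (u *m Nl A lam ^+ k.-1) 0 i != (u *m Nl A lam ^+ k.-1) 0 j ->
  exists2 w, (w <= Kc A lam k u)%MS &
    forall m, (m < k)%N -> ((x - w) *m Nl A lam ^+ m) 0 i = ((x - w) *m Nl A lam ^+ m) 0 j.
Proof.
move=> uk dn.
have k0 : (0 < k)%N.
  case: k uk dn => // uk; rewrite /= uk !mxE eqxx //.
have dn0 : (u *m Nl A lam ^+ k.-1) 0 i - (u *m Nl A lam ^+ k.-1) 0 j != 0.
  by rewrite subr_eq0.
suff H : forall l, (l <= k)%N -> exists2 w, (w <= Kc A lam k u)%MS &
    forall m, (k - l <= m < k)%N ->
      ((x - w) *m Nl A lam ^+ m) 0 i = ((x - w) *m Nl A lam ^+ m) 0 j.
  have [w wK Hw] := H k (leqnn k); exists w => // m mk; apply: Hw; lia.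
elim=> [|l IH] lk.
  by exists 0; [exact: sub0mx | move=> m; lia].
have [w wK Hw] := IH (ltnW lk).
set m0 := (k - l.+1)%N.
set dd := (u *m Nl A lam ^+ k.-1) 0 i - (u *m Nl A lam ^+ k.-1) 0 j.
pose cc := (((x - w) *m Nl A lam ^+ m0) 0 i - ((x - w) *m Nl A lam ^+ m0) 0 j) / dd.
exists (w + cc *: (u *m Nl A lam ^+ l)).
  by rewrite addmx_sub // scalemx_sub // Kc_pow.
move=> m /andP[m1 m2].
apply/eqP; rewrite -subr_eq0.
have -> : x - (w + cc *: (u *m Nl A lam ^+ l)) = (x - w) - cc *: (u *m Nl A lam ^+ l).
  by rewrite opprD addrA.
rewrite mulmxBl -scalemxAl -mulmxA mulmxE -exprD.
case: (eqVneq m m0) => [->|mm0].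
  have -> : (l + m0 = k.-1)%N by rewrite /m0; lia.
  rewrite /cc /dd; set X := (x - w) *m _; set Y := u *m _.
  rewrite !entry_BZ; apply/eqP.
  rewrite -/Y in dn0; move: dn0; set a := Y 0 i; set b := Y 0 j => dn0.
  set c := X 0 i; set e := X 0 j.
  have -> : c - (c - e) / (a - b) * a - (e - (c - e) / (a - b) * b) =
            (c - e) - (c - e) / (a - b) * (a - b) by ring.
  by rewrite divfK // subrr.
have mm : (k - l <= m < k)%N by apply/andP; split; [rewrite /m0 in m1 mm0; lia | exact: m2].
rewrite (powN0 uk (j := (l + m)%N)); last lia.
by rewrite scaler0 subr0 subr_eq0 (Hw _ mm).
Qed.

End Misc.


Lemma card_properC (T : finType) (X Y : {set T}) : X \proper Y -> (#|~: Y| < #|~: X|)%N.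
Proof. by rewrite -properC => /proper_card. Qed.

Section Span.
Variables (R : numClosedFieldType) (n v : nat) (A : 'M[nat]_n).
Hypothesis hA : regular_network A v.
Variables (lam : R) (S : 'M[R]_n) (r0 : {set 'I_n * 'I_n}).
Hypothesis Sst : (S *m adjR R A <= S)%MS.
Hypothesis Spd : (S == polydiag R r0)%MS.
Local Notation N := (Nl A lam).

Definition L j := (S :&: kermx (N ^+ j))%MS.
Definition spanS (s : seq 'rV[R]_n) : 'M[R]_n := (\sum_(t <- s) <<t>>)%MS.
Definition spt k (t : 'rV[R]_n) := [/\ (t <= S)%MS, t *m N ^+ k = 0,
  t *m N ^+ k.-1 != 0 & is_special A (K A lam k t)].

Lemma SN : (S *m N <= S)%MS.
Proof. by rewrite /Nl stablemxD ?stablemxN ?stablemxC. Qed.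

Lemma Pclos_S k x : (x <= S)%MS -> (Pclos (K A lam k x) <= S)%MS.
Proof.
move=> xS; have KS : (K A lam k x <= S)%MS by rewrite KcE Kc_sub // SN.
move/eqmxP: Spd => eS.
have : (K A lam k x <= polydiag R r0)%MS by rewrite -eS.
move=> H; rewrite eS; exact: (bigcapmx_inf r0 H (submx_refl _)).
Qed.

Lemma Kc_entry lam' k (u : 'rV[R]_n) (a : 'I_k) b :
  Kc A lam' k u a b = (u *m Nl A lam' ^+ (k.-1 - a)) 0 b.
Proof. by rewrite -row_Kc [RHS]mxE. Qed.

Lemma span_tops k : (0 < k)%N -> forall x : 'rV[R]_n, (x <= S)%MS -> x *m N ^+ k = 0 ->
  exists s, (forall t, t \in s -> spt k t) /\ (x <= L k.-1 + spanS s)%MS.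
Proof.
move=> k0.
suff H : forall m x, (#|~: prel (Kc A lam k x)| < m)%N -> (x <= S)%MS ->
    x *m N ^+ k = 0 ->
    exists s, (forall t, t \in s -> spt k t) /\ (x <= L k.-1 + spanS s)%MS.
  by move=> x; apply: (H _ x (ltnSn _)).
elim=> // m IH x lt xS xk.
case: (eqVneq (x *m N ^+ k.-1) 0) => [xk1|xk1].
  exists [::]; split => //; apply: submx_trans (addsmxSl _ _).
  by rewrite sub_capmx xS; apply/sub_kermxP.
case: (classic (is_special A (K A lam k x))) => sp.
  exists [:: x]; split.
    by move=> t; rewrite inE => /eqP->; split.
  by apply: submx_trans (addsmxSr _ _); rewrite /spanS big_seq1 genmxE.
apply: NNPP => ng; apply: sp; exists lam; split; first exact: K_jordan.
move=> U jU rkU pc.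
case: (boolP (U == Fsync R n)%MS) => [hF|nF]; first by right.
left; apply/negPn/negP => nP; apply: ng.
have [k' [u [k'0 uk uk1 eU]]] := jordan_K jU.
have rx : \rank (K A lam k x) = k by rewrite KcE rank_Kc.
have ru : \rank U = k' by rewrite eU rank_Kc.
have ekk : k' = k by rewrite -ru rkU.
clear ru; subst k'.
have relU : prel U = prel (Kc A lam k u) := rel_eqmx eU.
have relx : prel (K A lam k x) = prel (Kc A lam k x) := rel_eqmx (KcE _ _ _ _).
have sub1 : prel (Kc A lam k x) \subset prel (Kc A lam k u).
  by rewrite -relU -relx; exact: Pclos_le_rel.
have neq : prel (Kc A lam k u) != prel (Kc A lam k x).
  apply/negP => /eqP e; move/negP: nP; apply; apply: rel_eq_Pclos.
  by rewrite relU relx.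
have prop1 : prel (Kc A lam k x) \proper prel (Kc A lam k u).
  by rewrite properEneq eq_sym neq sub1.
have uS : (u <= S)%MS.
  have := @Kc_pow R n A lam k u 0%N k0; rewrite expr0 mulmx1 => uK.
  apply: submx_trans (Pclos_S k xS); apply: submx_trans pc.
  by apply: submx_trans (sub_Pclos U); rewrite eU.
have [i [j dij]] : exists i j,
    (u *m N ^+ k.-1) 0 i != (u *m N ^+ k.-1) 0 j.
  apply: NNPP => H.
  have cst : forall i j, (u *m N ^+ k.-1) 0 i = (u *m N ^+ k.-1) 0 j.
    move=> i j; apply/eqP; apply: NNPP => hij; apply: H; exists i, j; exact/negP.
  case: (ltnP 1 k) => [k1|k1].
    by have := perron hA k1 uk cst; apply/eqP.
  have ek : k = 1%N by apply/eqP; rewrite eqn_leq k1 k0.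
  subst k; move/negP: nF; apply; apply/eqmxP.
  apply: eqmx_trans eU _; apply: eqmx_trans (Fsync_const uk1 cst).
  apply/eqmxP/andP; split.
    by apply/row_subP => a; rewrite row_Kc (ord1 a).
  exact: Kc_pow.
have [w wK Hw] := fit x uk dij.
have wS : (w <= S)%MS by apply: submx_trans wK _; apply: Kc_sub => //; exact: SN.
have wk : w *m N ^+ k = 0 := sub_annih wK (Kc_annih uk).
have KwKu : (Kc A lam k w <= Kc A lam k u)%MS := Kc_sub k (Kc_stable uk) wK.
have prop_w : prel (Kc A lam k x) \proper prel (Kc A lam k w).
  exact: proper_sub_trans prop1 (rel_anti KwKu).
set y := x - w.
have yS : (y <= S)%MS by rewrite addmx_sub // eqmx_opp.
have yk : y *m N ^+ k = 0 by rewrite mulmxBl xk wk subrr.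
have ij_y : (i, j) \in prel (Kc A lam k y).
  rewrite rel_rowP; apply/forallP => a; rewrite !Kc_entry; apply/eqP; apply: Hw.
  by rewrite (leq_ltn_trans (leq_subr _ _)) // prednK.
have ij_x : (i, j) \notin prel (Kc A lam k x).
  apply/negP => /(subsetP sub1); rewrite rel_rowP => /forallP /(_ (Ordinal k0)).
  by rewrite !Kc_entry subn0 (negPf dij).
have sub_y : prel (Kc A lam k x) \subset prel (Kc A lam k y).
  apply/subsetP => p px; rewrite inE /y KcB addmx_sub // ?eqmx_opp.
    by move: px; rewrite inE.
  by apply: submx_trans KwKu _; move: (subsetP sub1 p px); rewrite inE.
have prop_y : prel (Kc A lam k x) \proper prel (Kc A lam k y).
  by apply/properP; split => //; exists (i, j).
have [sw [Hsw xw]] := IH w (leq_trans (card_properC prop_w) lt) wS wk.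
have [sy [Hsy xy]] := IH y (leq_trans (card_properC prop_y) lt) yS yk.
exists (sw ++ sy); split.
  by move=> t; rewrite mem_cat => /orP[/Hsw|/Hsy].
rewrite (_ : x = w + y); last by rewrite /y addrC subrK.
apply: submx_trans (addmx_sub_adds xw xy) _.
rewrite /spanS big_cat /=.
set P := L k.-1; set X := (\sum_(t <- sw) <<t>>)%MS; set Y := (\sum_(t <- sy) <<t>>)%MS.
rewrite !addsmx_sub addsmxSl /=.
have h1 : (X <= P + (X + Y))%MS by apply: submx_trans (addsmxSr _ _); apply: addsmxSl.
have h2 : (Y <= P + (X + Y))%MS by apply: submx_trans (addsmxSr _ _); apply: addsmxSr.
by rewrite h1 h2.
Qed.

End Span.


Section SeqSums.
Variables (F : fieldType) (n : nat).

Lemma sum_seq_sup (I : eqType) (s : seq I) (G : I -> 'M[F]_n) i m (X : 'M[F]_(m, n)) :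
  i \in s -> (X <= G i)%MS -> (X <= \sum_(j <- s) G j)%MS.
Proof.
elim: s => // a s IH; rewrite inE big_cons => /orP[/eqP<-|hs] XG.
  by apply: submx_trans XG (addsmxSl _ _).
by apply: submx_trans (IH hs XG) (addsmxSr _ _).
Qed.

Lemma sum_seq_sub (I : eqType) (s : seq I) (G : I -> 'M[F]_n) m (Y : 'M[F]_(m, n)) :
  (forall i, i \in s -> (G i <= Y)%MS) -> (\sum_(j <- s) G j <= Y)%MS.
Proof.
elim: s => [|a s IH] H; first by rewrite big_nil sub0mx.
rewrite big_cons addsmx_sub H ?mem_head //=; apply: IH => i hs.
by apply: H; rewrite inE hs orbT.
Qed.

Lemma sum_seq_stable (I : eqType) (s : seq I) (G : I -> 'M[F]_n) (B : 'M[F]_n) :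
  (forall i, i \in s -> (G i *m B <= G i)%MS) ->
  ((\sum_(j <- s) G j)%MS *m B <= \sum_(j <- s) G j)%MS.
Proof.
elim: s => [|a s IH] H; first by rewrite big_nil mul0mx sub0mx.
rewrite big_cons addsmxMr; apply: addsmxS; first by apply: H; rewrite mem_head.
by apply: IH => i hs; apply: H; rewrite inE hs orbT.
Qed.

Definition spanS' (s : seq 'rV[F]_n) : 'M[F]_n := (\sum_(t <- s) <<t>>)%MS.

Lemma extract (Pk : 'rV[F]_n -> Prop) (Y Z : 'M[F]_n) : (Y <= Z)%MS ->
  (forall t, Pk t -> (t <= Z)%MS) ->
  (forall z : 'rV[F]_n, (z <= Z)%MS -> exists s, (forall t, t \in s -> Pk t) /\
      (z <= Y + spanS' s)%MS) ->
  exists T, [/\ forall t, t \in T -> Pk t, (size T + \rank Y <= \rank Z)%N &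
             (Z <= Y + spanS' T)%MS].
Proof.
move=> YZ PZ Hsp.
have [m] := ubnP (\rank Z - \rank Y)%N; elim: m Y YZ Hsp => // m IH Y YZ Hsp lt.
case: (boolP (Z <= Y)%MS) => [ZY|nZY].
  exists [::]; split => //; first by rewrite add0n mxrankS.
  exact: submx_trans ZY (addsmxSl _ _).
have [a na] := row_subPn nZY.
have [s [Ps zs]] := Hsp _ (row_sub a Z).
have [t ts tY] : exists2 t, t \in s & ~~ (t <= Y)%MS.
  apply: NNPP => H; move/negP: na; apply; apply: submx_trans zs _.
  rewrite addsmx_sub submx_refl /=; apply: sum_seq_sub => t ts; rewrite genmxE.
  by apply: NNPP => tn; apply: H; exists t => //; apply/negP.
set Y' := (Y + t)%MS.
have Pt := Ps t ts.
have Y'Z : (Y' <= Z)%MS by rewrite addsmx_sub YZ PZ.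
have rY : (\rank Y < \rank Y')%N.
  apply: rank_ltmx; rewrite ltmxE addsmxSl /=; apply: contra tY.
  by apply: submx_trans (addsmxSr _ _).
have rY' : (\rank Y' <= \rank Z)%N := mxrankS Y'Z.
have Hsp' : forall z : 'rV[F]_n, (z <= Z)%MS -> exists s, (forall t, t \in s -> Pk t) /\
      (z <= Y' + spanS' s)%MS.
  move=> z zZ; have [s' [Ps' zs']] := Hsp z zZ; exists s'; split => //.
  by apply: submx_trans zs' _; apply: addsmxS => //; apply: addsmxSl.
have lt' : (\rank Z - \rank Y' < m)%N.
  move: lt rY rY'; set a1 := \rank Z; set a2 := \rank Y; set a3 := \rank Y'; lia.
have [T [PT sT ZT]] := IH Y' Y'Z Hsp' lt'.
exists (t :: T); split.
- by move=> t'; rewrite inE => /orP[/eqP->|/PT].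
- move: sT rY; set a1 := \rank Z; set a2 := \rank Y; set a3 := \rank Y'.
  rewrite /=; lia.
- apply: submx_trans ZT _; rewrite /spanS' big_cons /Y' -addsmxA.
  apply: addsmxS => //; apply: addsmxS => //; rewrite genmxE //.
Qed.

End SeqSums.


Section PartA.
Variables (R : numClosedFieldType) (n v : nat) (A : 'M[nat]_n).
Hypothesis hA : regular_network A v.
Variables (lam : R) (S : 'M[R]_n) (r0 : {set 'I_n * 'I_n}).
Hypothesis Sst : (S *m adjR R A <= S)%MS.
Hypothesis Spd : (S == polydiag R r0)%MS.
Local Notation N := (Nl A lam).
Local Notation LL := (L A lam S).

Lemma subL m (X : 'M[R]_(m, n)) j : (X <= LL j)%MS = (X <= S)%MS && (X *m N ^+ j == 0).
Proof. by rewrite sub_capmx sub_kermx. Qed.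

Lemma L_S j : (LL j <= S)%MS.
Proof. exact: capmxSl. Qed.

Lemma L_ann j : LL j *m N ^+ j = 0.
Proof. by apply/eqP; rewrite -sub_kermx capmxSr. Qed.

Lemma L_mono j : (LL j <= LL j.+1)%MS.
Proof. by rewrite subL L_S exprSr -mulmxE mulmxA L_ann mul0mx eqxx. Qed.

Lemma L_NS j : (LL j.+1 *m N <= LL j)%MS.
Proof.
rewrite subL (submx_trans (submxMr _ (L_S _)) (SN lam Sst)) /=.
rewrite -mulmxA; have -> : N *m N ^+ j = N ^+ j.+1 by rewrite exprS mulmxE.
by rewrite L_ann.
Qed.

Lemma L0 m (X : 'M[R]_(m, n)) : (LL 0 <= X)%MS.
Proof.
have := L_ann 0; rewrite expr0 mulmx1 => ->; exact: sub0mx.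
Qed.

Lemma rankY k : (0 < k)%N ->
  (\rank (LL k.-1) + \rank (LL k.+1) <= \rank (LL k.-1 + LL k.+1 *m N)%MS + \rank (LL k))%N.
Proof.
move=> k0.
have e1 := mxrank_sum_cap (LL k.-1) (LL k.+1 *m N).
have e2 := mxrank_mul_ker (LL k.+1) N.
have e3 := mxrank_mul_ker (LL k) N.
have s1 : (\rank (LL k.+1 :&: kermx N) <= \rank (LL k :&: kermx N))%N.
  apply: mxrankS; rewrite sub_capmx capmxSr andbT subL.
  rewrite (submx_trans (capmxSl _ _) (L_S _)) /=.
  have : (LL k.+1 :&: kermx N)%MS *m N = 0 by apply/eqP; rewrite -sub_kermx capmxSr.
  by rewrite -(prednK k0) exprS -mulmxE mulmxA => ->; rewrite mul0mx.
have s2 : (\rank (LL k.-1 :&: LL k.+1 *m N) <= \rank (LL k *m N))%N.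
  apply: mxrankS.
  have /submxP [D eD] : (LL k.-1 :&: LL k.+1 *m N <= LL k.+1 *m N)%MS by exact: capmxSr.
  rewrite eD mulmxA; apply: submxMr; rewrite subL.
  rewrite (submx_trans (submxMl _ _) (L_S _)) /=.
  have : (LL k.-1 :&: LL k.+1 *m N)%MS *m N ^+ k.-1 = 0.
    by apply/eqP; rewrite -sub_kermx (submx_trans (capmxSl _ _)) // capmxSr.
  by rewrite eD -(prednK k0) exprS -mulmxE !mulmxA => /= ->.
move: e1 e2 e3 s1 s2.
set a := \rank (LL k.-1 + LL k.+1 *m N)%MS.
set b := \rank (LL k.-1 :&: LL k.+1 *m N)%MS.
set c := \rank (LL k.+1 *m N).
set d := \rank (LL k.+1 :&: kermx N)%MS.
set e := \rank (LL k *m N).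
set f := \rank (LL k :&: kermx N)%MS.
set g := \rank (LL k.-1); set h := \rank (LL k.+1); set i := \rank (LL k).
lia.
Qed.


Definition Yk k : 'M[R]_n := (LL k.-1 + (if (k < n)%N then LL k.+1 *m N else 0))%MS.

Lemma topsel k : (0 < k <= n)%N -> exists T : seq 'rV[R]_n,
  [/\ forall t, t \in T -> spt A lam S k t, (size T + \rank (Yk k) <= \rank (LL k))%N &
      (LL k <= Yk k + spanS T)%MS].
Proof.
case/andP=> k0 kn.
have YZ : (Yk k <= LL k)%MS.
  rewrite /Yk addsmx_sub -{2}(prednK k0) L_mono /=.
  by case: ifP => _; rewrite ?sub0mx // L_NS.
have PZ : forall t, spt A lam S k t -> (t <= LL k)%MS.
  by move=> t [tS tk _ _]; rewrite subL tS tk eqxx.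
have Hsp : forall z : 'rV[R]_n, (z <= LL k)%MS -> exists s,
    (forall t, t \in s -> spt A lam S k t) /\ (z <= Yk k + spanS' s)%MS.
  move=> z; rewrite subL => /andP[zS /eqP zk].
  have [s [Ps zs]] := span_tops hA Sst Spd k0 zS zk.
  exists s; split => //; apply: submx_trans zs _; apply: addsmxS => //.
  exact: addsmxSl.
have [T [PT sT ZT]] := extract YZ PZ Hsp.
by exists T.
Qed.

Lemma partA : exists ts : seq (nat * 'rV[R]_n),
  [/\ forall kt, kt \in ts -> (0 < kt.1)%N /\ spt A lam S kt.1 kt.2,
      (LL n <= \sum_(kt <- ts) K A lam kt.1 kt.2)%MS &
      (\sum_(kt <- ts) kt.1 <= \rank (LL n))%N].
Proof.
have H : forall k, exists T : seq 'rV[R]_n, (0 < k <= n)%N ->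
  [/\ forall t, t \in T -> spt A lam S k t, (size T + \rank (Yk k) <= \rank (LL k))%N &
      (LL k <= Yk k + spanS T)%MS].
  move=> k; case: (boolP (0 < k <= n)%N) => h.
    by have [T HT] := topsel h; exists T.
  by exists [::].
pose T k := proj1_sig (constructive_indefinite_description _ (H k)).
have HT : forall k, (0 < k <= n)%N -> [/\ forall t, t \in T k -> spt A lam S k t,
    (size (T k) + \rank (Yk k) <= \rank (LL k))%N & (LL k <= Yk k + spanS (T k))%MS].
  move=> k; exact: (proj2_sig (constructive_indefinite_description _ (H k))).
pose C := (\sum_(1 <= k < n.+1) \sum_(t <- T k) K A lam k t)%MS.
have CK : forall k t, (0 < k <= n)%N -> t \in T k -> (K A lam k t <= C)%MS.
  move=> k t kn tT; apply: (sum_seq_sup (i := k)).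
    by rewrite mem_index_iota ltnS.
  exact: (sum_seq_sup (i := t)).
have Cst : (C *m N <= C)%MS.
  apply: sum_seq_stable => k; rewrite mem_index_iota ltnS => kn.
  apply: sum_seq_stable => t tT.
  have [Pt _ _] := HT k kn; have [_ tk _ _] := Pt t tT.
  by rewrite (eqmx_stable _ (KcE _ _ _ _)) Kc_stable.
have spanT : forall k, (0 < k <= n)%N -> (spanS (T k) <= C)%MS.
  move=> k kn; apply: sum_seq_sub => t tT; rewrite genmxE.
  apply: submx_trans (CK k t kn tT); rewrite KcE.
  have := @Kc_pow R n A lam k t 0%N; rewrite expr0 mulmx1; apply.
  by case/andP: kn.
have Q : forall j, (j < n)%N -> (LL (n - j) <= C + LL (n - j).-1)%MS.
  elim=> [|j IH] jn.
    have [_ _ Z] := HT n (andb_true_intro (conj jn (leqnn n))).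
    rewrite subn0; apply: submx_trans Z _.
    rewrite /Yk ltnn addsmx0_id addsmxC; apply: addsmxS => //; exact: spanT (andb_true_intro (conj jn (leqnn n))).
  set k := (n - j.+1)%N.
  have k0 : (0 < k)%N by rewrite /k subn_gt0.
  have kn : (k < n)%N by rewrite /k ltn_subrL ltn0Sn (leq_trans _ jn).
  have ek : (n - j = k.+1)%N by rewrite /k; lia.
  have := IH (ltnW jn); rewrite ek /= => IHk.
  have [_ _ Z] := HT k (andb_true_intro (conj k0 (ltnW kn))).
  apply: submx_trans Z _; rewrite /Yk kn.
  rewrite !addsmx_sub; apply/andP; split; first (apply/andP; split).
  - exact: addsmxSr.
  - apply: submx_trans (submxMr N IHk) _; rewrite addsmxMr addsmxS //.
    by rewrite -{1}(prednK k0) L_NS.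
  - by apply: submx_trans (spanT k _) (addsmxSl _ _); rewrite k0 ltnW.
have Up : forall k, (k <= n)%N -> (LL k <= C)%MS.
  elim=> [|k IH] kn; first exact: L0.
  have := Q (n - k.+1)%N; rewrite subKn // => /(_ _) Hk.
  have Hk' := Hk _; rewrite /= in Hk'.
  apply: submx_trans (Hk' _) _; first by rewrite /=; lia.
  by rewrite addsmx_sub submx_refl IH // ltnW.
case: (posnP n) => [n0|n0].
  exists [::]; split => //; rewrite ?big_nil //.
  by move: (L_ann n); rewrite [X in _ ^+ X]n0 expr0 mulmx1 => ->; exact: sub0mx.
pose ts := flatten [seq [seq (k, t) | t <- T k] | k <- index_iota 1 n.+1].
exists ts; split.
- move=> kt /flattenP [s /mapP [k kI ->] /mapP [t tT ->]] /=.
  move: kI; rewrite mem_index_iota ltnS => kn; split; first by case/andP: kn.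
  by have [Pt _ _] := HT k kn; apply: Pt.
- have -> : (\sum_(kt <- ts) K A lam kt.1 kt.2)%MS = C.
    by rewrite /ts big_flatten big_map /=; apply: eq_bigr => k _; rewrite big_map.
  exact: Up.
rewrite /ts big_flatten big_map /=.
under eq_bigr => k _ do rewrite big_map /= big_const_seq count_predT iter_addn_0.
apply: (@count_lemma (fun k => size (T k)) (fun k => \rank (LL k))) => //.
- apply/eqP; rewrite -leqn0; apply: leq_trans (mxrankS (L0 (0 : 'M[R]_n))) _; by rewrite mxrank0.
- move=> k /andP[k0 kn].
  have [_ sT _] := HT k (andb_true_intro (conj k0 (ltnW kn))).
  have := rankY k0; move: sT; rewrite /Yk kn.
  set a := size (T k); set b := \rank (LL k.-1 + LL k.+1 *m N)%MS.
  set c := \rank (LL k); set d := \rank (LL k.-1); set e := \rank (LL k.+1).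
  lia.
- have [_ sT _] := HT n (andb_true_intro (conj n0 (leqnn n))).
  by move: sT; rewrite /Yk ltnn addsmx0_id.
Qed.

End PartA.


Section PartB.
Variables (F : fieldType) (n' : nat).
Local Notation n := n'.+1.
Variables (g S : 'M[F]_n).
Hypothesis Sst : (S *m g <= S)%MS.

Local Notation kh p := (kermx (horner_mx g p)).

Lemma kh_mul p q : (kh p <= kh (p * q))%MS.
Proof.
apply/sub_kermxP; rewrite rmorphM /= mulmxA.
by have /sub_kermxP -> := submx_refl (kh p); rewrite mul0mx.
Qed.

Lemma S_bezout p q : coprimep p q ->
  (S :&: kh (p * q) <= (S :&: kh p) + (S :&: kh q))%MS.
Proof.
case/Bezout_eq1_coprimepP => [[u w]] /= e.
set X := (S :&: kh (p * q))%MS.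
have XS : (X <= S)%MS := capmxSl _ _.
have Xk : X *m horner_mx g (p * q) = 0 by apply/sub_kermxP; exact: capmxSr.
have -> : X = X *m horner_mx g (u * p) + X *m horner_mx g (w * q).
  by rewrite -mulmxDr -rmorphD /= e rmorph1 mulmx1.
rewrite addsmxC; apply: addmx_sub_adds; rewrite sub_capmx.
- rewrite (submx_trans (submxMr _ XS)) ?horner_mx_stable //=.
  apply/sub_kermxP; rewrite -mulmxA mulmxE -rmorphM /=.
  rewrite (_ : u * p * q = (p * q) * u); last by ring.
  by rewrite rmorphM /= -mulmxE mulmxA Xk mul0mx.
- rewrite (submx_trans (submxMr _ XS)) ?horner_mx_stable //=.
  apply/sub_kermxP; rewrite -mulmxA mulmxE -rmorphM /=.
  rewrite (_ : w * q * p = (p * q) * w); last by ring.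
  by rewrite rmorphM /= -mulmxE mulmxA Xk mul0mx.
Qed.


Lemma coprime_prod (a : F) (ls : seq F) m : a \notin ls ->
  coprimep (('X - a%:P) ^+ m) (\prod_(l <- ls) ('X - l%:P) ^+ m).
Proof.
elim: ls => [|b ls IH]; first by rewrite big_nil coprimep1.
rewrite inE negb_or big_cons => /andP[ab als].
rewrite coprimepMr IH // andbT.
by rewrite coprimep_expr // coprimep_expl // coprimep_XsubC root_XsubC eq_sym.
Qed.

Lemma kh1 : kh 1 = 0.
Proof. by rewrite rmorph1; apply/eqP; rewrite kermx_eq0 row_free_unit unitmx1. Qed.

Lemma B2 (ls : seq F) m : uniq ls ->
  (S :&: kh (\prod_(l <- ls) ('X - l%:P) ^+ m) <=
     \sum_(l <- ls) (S :&: kh (('X - l%:P) ^+ m)))%MS.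
Proof.
elim: ls => [|a ls IH]; first by rewrite !big_nil kh1 capmx0 sub0mx.
rewrite /= => /andP[als uls]; rewrite !big_cons.
apply: submx_trans (S_bezout (coprime_prod m als)) _.
by apply: addsmxS => //; apply: IH.
Qed.

Lemma B4 (ls : seq F) m : uniq ls ->
  (\sum_(l <- ls) \rank (S :&: kh (('X - l%:P) ^+ m)) <= \rank S)%N.
Proof.
move=> uls.
suff [H1 H2 H3] : [/\ (\sum_(l <- ls) \rank (S :&: kh (('X - l%:P) ^+ m)) <=
    \rank (\sum_(l <- ls) (S :&: kh (('X - l%:P) ^+ m)))%MS)%N,
    (\sum_(l <- ls) (S :&: kh (('X - l%:P) ^+ m)) <= kh (\prod_(l <- ls) ('X - l%:P) ^+ m))%MS &
    (\sum_(l <- ls) (S :&: kh (('X - l%:P) ^+ m)) <= S)%MS].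
  by apply: leq_trans H1 (mxrankS H3).
elim: ls uls => [|a ls IH]; first by rewrite !big_nil mxrank0 !sub0mx.
rewrite /= => /andP[als uls]; have [H1 H2 H3] := IH uls.
rewrite !big_cons; split.
- set La := (S :&: kh (('X - a%:P) ^+ m))%MS.
  set X := (\sum_(l <- ls) (S :&: kh (('X - l%:P) ^+ m)))%MS.
  have e := mxrank_sum_cap La X.
  have c0 : (La :&: X)%MS = 0.
    apply/eqP; rewrite -submx0.
    have := mxdirect_kermxpoly g (coprime_prod m als).
    rewrite /kermxpoly /= => <-.
    by apply: capmxS => //; apply: capmxSr.
  move: e; rewrite c0 mxrank0 addn0 => ->.
  by rewrite leq_add2l.
- rewrite addsmx_sub; apply/andP; split.
    by apply: submx_trans (capmxSr _ _) (kh_mul _ _).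
  by apply: submx_trans H2 _; rewrite mulrC kh_mul.
by rewrite addsmx_sub capmxSl H3.
Qed.

End PartB.

Section PartB3.
Variables (F : closedFieldType) (n' : nat).
Local Notation n := n'.+1.
Variables (g : 'M[F]_n).

Lemma B3 : exists ls : seq F, uniq ls /\
  horner_mx g (\prod_(l <- ls) ('X - l%:P) ^+ n) = 0.
Proof.
have [rs e] := closed_field_poly_normal (char_poly g).
have lc : lead_coef (char_poly g) = 1 by apply/monicP; exact: char_poly_monic.
rewrite lc scale1r in e.
have srs : size rs = n.
  by have := size_char_poly g; rewrite e size_prod_XsubC => -[].
exists (undup rs); split; first exact: undup_uniq.
have dv : char_poly g %| \prod_(l <- undup rs) ('X - l%:P) ^+ n.
  rewrite e -prodr_undup_exp_count.
  apply: (big_ind2 (fun a b => a %| b)) => //.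
    by move=> a b c d; apply: dvdp_mul.
  move=> l _; apply: dvdp_exp2l; rewrite -srs; exact: count_size.
have := mxminpoly_dvd_char g => md.
by apply/mxminpoly_minP; apply: dvdp_trans md dv.
Qed.

End PartB3.


Section Final.
Variables (R : numClosedFieldType) (n v : nat) (A : 'M[nat]_n).
Hypothesis hA : regular_network A v.

Lemma special_stable W : is_special A W -> (W *m adjR R A <= W)%MS.
Proof.
case=> lam [jW _]; have [k [u [k0 uk uk1 eW]]] := jordan_K jW.
rewrite (eqmx_stable _ eW).
have -> : adjR R A = Nl A lam + lam%:M by rewrite /Nl subrK.
by rewrite stablemxD ?stablemxC // Kc_stable.
Qed.

Lemma backward (S : 'M[R]_n) m (J : 'I_m -> 'M[R]_n) :
  (forall i, is_special A (J i)) -> (S == \sum_(i < m) J i)%MS ->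
  (S *m adjR R A <= S)%MS.
Proof.
move=> sp /eqmxP eS; rewrite (eqmx_stable _ eS).
by apply: stablemx_sums => i; apply: special_stable.
Qed.

Lemma forward (S : 'M[R]_n) r0 :
  (S *m adjR R A <= S)%MS -> (S == polydiag R r0)%MS ->
  (exists ls : seq R, (S <= \sum_(l <- ls) L A l S n)%MS /\
      (\sum_(l <- ls) \rank (L A l S n) <= \rank S)%N) ->
  exists m (J : 'I_m -> 'M[R]_n), (forall i, is_special A (J i)) /\
    mxdirect (\sum_(i < m) J i) /\ (S == \sum_(i < m) J i)%MS.
Proof.
move=> Sst Spd [ls [Sls rls]].
have H : forall l : R, exists ts : seq (nat * 'rV[R]_n),
  [/\ forall kt, kt \in ts -> (0 < kt.1)%N /\ spt A l S kt.1 kt.2,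
      (L A l S n <= \sum_(kt <- ts) K A l kt.1 kt.2)%MS &
      (\sum_(kt <- ts) kt.1 <= \rank (L A l S n))%N].
  by move=> l; apply: (partA hA l Sst Spd).
pose TS l := proj1_sig (constructive_indefinite_description _ (H l)).
have HTS : forall l, [/\ forall kt, kt \in TS l -> (0 < kt.1)%N /\ spt A l S kt.1 kt.2,
      (L A l S n <= \sum_(kt <- TS l) K A l kt.1 kt.2)%MS &
      (\sum_(kt <- TS l) kt.1 <= \rank (L A l S n))%N].
  by move=> l; exact: (proj2_sig (constructive_indefinite_description _ (H l))).
pose all := flatten [seq [seq (l, kt) | kt <- TS l] | l <- ls].
pose Js := [seq K A x.1 x.2.1 x.2.2 | x <- all].
pose J (i : 'I_(size Js)) := nth 0 Js i.
have sumJ : (\sum_(i < size Js) J i)%MS = (\sum_(X <- Js) X)%MS.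
  by rewrite (big_nth 0) big_mkord.
have sumJn : (\sum_(i < size Js) \rank (J i))%N = (\sum_(X <- Js) \rank X)%N.
  by rewrite (big_nth 0) big_mkord.
have Jall : forall X, X \in Js -> exists l k t, X = K A l k t /\ spt A l S k t.
  move=> X /mapP [x /flattenP [s /mapP [l' l'ls es] xs] ->]; subst s.
  move: xs => /mapP [kt ktT ex]; subst x.
  exists l', kt.1, kt.2; split => //.
  by have [P _ _] := HTS l'; case: (P kt ktT).
have KS : forall l k t, spt A l S k t -> (K A l k t <= S)%MS.
  move=> l k t [tS tk _ _]; rewrite KcE Kc_sub //; exact: SN.
have sumE : (\sum_(X <- Js) X)%MS =
    (\sum_(l <- ls) \sum_(kt <- TS l) K A l kt.1 kt.2)%MS.
  by rewrite big_map big_flatten big_map /=; apply: eq_bigr => l _; rewrite big_map.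
have SJ : (S <= \sum_(X <- Js) X)%MS.
  apply: submx_trans Sls _; rewrite sumE; apply: sum_seq_sub => l lls.
  by have [_ HL _] := HTS l; apply: (sum_seq_sup lls HL).
have JS : (\sum_(X <- Js) X <= S)%MS.
  apply: sum_seq_sub => X /Jall [l [k [t [-> st]]]]; exact: KS.
have rk : (\sum_(X <- Js) \rank X <= \rank S)%N.
  apply: leq_trans rls.
  rewrite big_map big_flatten big_map /=; apply: leq_sum => l _.
  rewrite big_map; have [_ _ HC] := HTS l; apply: leq_trans HC.
  by apply: leq_sum => kt _; exact: rank_Kc_le.
exists (size Js), J; split; [|split].
- move=> i; rewrite /J; have [l [k [t [-> [_ _ _ sp]]]]] := Jall _ (mem_nth 0 (ltn_ord i)); exact: sp.
- rewrite mxdirectEgeq /= sumJn sumJ.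
  by apply: leq_trans rk (mxrankS SJ).
- by rewrite sumJ; apply/andP; split.
Qed.

End Final.


Lemma ls_exists (R : numClosedFieldType) (n : nat) (A : 'M[nat]_n) (S : 'M[R]_n) :
  (S *m adjR R A <= S)%MS ->
  exists ls : seq R, (S <= \sum_(l <- ls) L A l S n)%MS /\
      (\sum_(l <- ls) \rank (L A l S n) <= \rank S)%N.
Proof.
case: n A S => [|n'] A S Sst.
  by exists [::]; rewrite !big_nil (thinmx0 S) sub0mx.
set g := adjR R A.
have [ls [uls hz]] := B3 g.
have he : forall l m, horner_mx g (('X - l%:P) ^+ m) = Nl A l ^+ m.
  by move=> l m; rewrite rmorphXn /= rmorphB /= horner_mx_X horner_mx_C.
exists ls; split.
  have S1 : (S <= S :&: kermx (horner_mx g (\prod_(l <- ls) ('X - l%:P) ^+ n'.+1)))%MS.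
    by rewrite sub_capmx submx_refl hz sub_kermx mulmx0 eqxx.
  apply: submx_trans S1 _; apply: submx_trans (B2 Sst _ uls) _.
  by rewrite /L; under eq_bigr => l _ do rewrite he.
have := @B4 _ _ g S ls n'.+1 uls.
by rewrite /L; under eq_bigr => l _ do rewrite he.
Qed.

Theorem mainTheorem7 (R : numClosedFieldType) (n v : nat) (A : 'M[nat]_n)
    (hA : regular_network A v) (S : 'M[R]_n) :
  is_synchrony A S <->
  is_polydiagonal S /\
  exists (m : nat) (J : 'I_m -> 'M[R]_n),
    (forall i, is_special A (J i)) /\
    mxdirect (\sum_(i < m) J i) /\ (S == \sum_(i < m) J i)%MS.
Proof.
split.
  case=> [[r0 Spd] Sst]; split; first by exists r0.
  exact: (forward hA Sst Spd (ls_exists Sst)).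
case=> [[r0 Spd] [m [J [sp [_ eS]]]]]; split; first by exists r0.
exact: backward sp eS.
Qed.
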